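(* Let $N > n > m$ be positive integers and let $p(w) = c_N w^N + \sum_{k=m}^n c_k w^k + c_0$ be a polynomial with complex coefficients, where $c_0 \neq 0$ and $c_N \neq 0$. Define \[ R_1 := \max\left\{ 1, \frac{1}{|c_N|}\left(|c_0| + \sum_{k=m}^{n} |c_k|\right)\right\}, \qquad R_0 := \min\left\{ 1, \frac{|c_0|}{|c_N| + \sum_{k=m}^n |c_k|}\right\}. \] Then every root $w \in \mathbb{C}$ of $p$ satisfies $R_0^{1/m} \leq |w| \leq R_1^{1/(N-n)}$. *)

(* Defs.v *)
From Stdlib Require Export Reals.
From Coquelicot Require Export Coquelicot.

Open Scope R_scope.

Definition poly_p (N n m : nat) (cN c0 : C) (c : nat -> C) (w : C) : C :=
  Cplus (Cplus (Cmult cN (Cpow w N))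
               (sum_n_m (fun k => Cmult (c k) (Cpow w k)) m n)) c0.

Definition bigR1 (n m : nat) (cN c0 : C) (c : nat -> C) : R :=
  Rmax 1 ((Cmod c0 + sum_n_m (fun k => Cmod (c k)) m n) / Cmod cN).

Definition smallR0 (n m : nat) (cN c0 : C) (c : nat -> C) : R :=
  Rmin 1 (Cmod c0 / (Cmod cN + sum_n_m (fun k => Cmod (c k)) m n)).

(* Main.v *)
Require Import Defs.
From Stdlib Require Import Reals.
From Coquelicot Require Import Coquelicot.
From Stdlib Require Import Lra Lia Arith.
Open Scope R_scope.

Lemma sum_le_loc (a b : nat -> R) (m n : nat) :
  (forall k, (m <= k <= n)%nat -> a k <= b k) ->
  sum_n_m a m n <= sum_n_m b m n.
Proof.
  intros H. destruct (le_lt_dec m n) as [Hmn|Hnm].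
  - induction n as [|n IH].
    + assert (m = 0%nat) by lia. subst. rewrite !sum_n_n. apply H; lia.
    + destruct (Nat.eq_dec m (S n)) as [E|E].
      * subst. rewrite !sum_n_n. apply H; lia.
      * rewrite !sum_n_Sm by lia.
        assert (sum_n_m a m n <= sum_n_m b m n) by (apply IH; intros; [apply H; lia| lia]).
        assert (a (S n) <= b (S n)) by (apply H; lia).
        change (sum_n_m a m n + a (S n) <= sum_n_m b m n + b (S n)). lra.
  - rewrite !sum_n_m_zero by lia. apply Rle_refl.
Qed.

Lemma Cmod_pow (w : C) k : Cmod (Cpow w k) = Cmod w ^ k.
Proof.
  induction k; simpl. apply Cmod_1. rewrite Cmod_mult, IHk. reflexivity.
Qed.

Lemma sum_bound (c : nat -> C) (w : C) m n :
  Cmod (sum_n_m (fun k => Cmult (c k) (Cpow w k)) m n)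
  <= sum_n_m (fun k => Cmod (c k) * Cmod w ^ k) m n.
Proof.
  eapply Rle_trans. apply (norm_sum_n_m (K:=C_AbsRing) (V:=C_NormedModule)).
  apply sum_le_loc. intros k _. change (Cmod (c k * Cpow w k)%C <= Cmod (c k) * Cmod w ^ k).
  rewrite Cmod_mult, Cmod_pow. lra.
Qed.

Lemma sum_factor (c : nat -> C) m n x :
  sum_n_m (fun k => Cmod (c k) * x) m n = sum_n_m (fun k => Cmod (c k)) m n * x.
Proof.
  apply (sum_n_m_mult_r (K:=R_Ring)).
Qed.

Lemma sum_nonneg (c : nat -> C) m n : 0 <= sum_n_m (fun k => Cmod (c k)) m n.
Proof.
  assert (H := sum_le_loc (fun _ => 0) (fun k => Cmod (c k)) m n).
  assert (H0 : sum_n_m (fun _ : nat => 0) m n = 0).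
  { apply (sum_n_m_const_zero (G:=R_AbelianMonoid)). }
  rewrite H0 in H. apply H. intros; apply Cmod_ge_0.
Qed.

Lemma root_pow r k : 0 < r -> (0 < k)%nat -> Rpower (r ^ k) (/ INR k) = r.
Proof.
  intros. rewrite <- Rpower_pow by lra. rewrite Rpower_mult.
  rewrite Rinv_r. apply Rpower_1; lra. apply not_0_INR; lia.
Qed.

Lemma Rpower_ge1 x y : 1 <= x -> 0 <= y -> 1 <= Rpower x y.
Proof. intros. rewrite <- (Rpower_O x) at 1 by lra. apply Rle_Rpower; lra. Qed.

Lemma Rpower_le1 x y : 0 < x <= 1 -> 0 <= y -> Rpower x y <= 1.
Proof.
  intros. unfold Rpower. rewrite <- exp_0. 
  assert (ln x <= 0). { rewrite <- ln_1. destruct (Req_dec x 1). subst; lra.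
    left; apply ln_increasing; lra. }
  destruct (Req_dec (y * ln x) 0) as [E|E]. rewrite E; lra.
  left; apply exp_increasing. nra.
Qed.

Theorem proposition2p1 (N n m : nat) (cN c0 : C) (c : nat -> C) (w : C) :
  (0 < m)%nat -> (m < n)%nat -> (n < N)%nat ->
  c0 <> 0%C -> cN <> 0%C ->
  poly_p N n m cN c0 c w = 0%C ->
  Rpower (smallR0 n m cN c0 c) (/ INR m) <= Cmod w /\
  Cmod w <= Rpower (bigR1 n m cN c0 c) (/ INR (N - n)).
Proof.
  intros Hm Hmn HnN H0 HN Hp.
  unfold poly_p in Hp.
  set (X := (cN * Cpow w N)%C) in Hp.
  set (Y := sum_n_m (fun k => Cmult (c k) (Cpow w k)) m n) in Hp.
  assert (EX : X = Copp (Cplus Y c0)).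
  { destruct X as [x1 x2], Y as [y1 y2], c0 as [z1 z2].
    unfold Cplus, Copp in *; simpl in *. injection Hp; intros.
    f_equal; lra. }
  assert (EZ : c0 = Copp (Cplus X Y)).
  { destruct X as [x1 x2], Y as [y1 y2], c0 as [z1 z2].
    unfold Cplus, Copp in *; simpl in *. injection Hp; intros.
    f_equal; lra. }
  set (r := Cmod w).
  set (a := Cmod cN). set (b := Cmod c0).
  set (S := sum_n_m (fun k => Cmod (c k)) m n).
  assert (Ha : 0 < a) by (apply Cmod_gt_0; auto).
  assert (Hb : 0 < b) by (apply Cmod_gt_0; auto).
  assert (HS : 0 <= S) by apply sum_nonneg.
  assert (Hr : 0 <= r) by apply Cmod_ge_0.
  assert (HX : Cmod X = a * r ^ N) by (unfold X; rewrite Cmod_mult, Cmod_pow; reflexivity).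
  assert (HY := sum_bound c w m n). fold Y r in HY.
  split.
  -
    assert (HR0pos : 0 < Cmod c0 / (Cmod cN + S)).
    { apply Rdiv_lt_0_compat; fold a b; lra. }
    unfold smallR0. fold S.
    destruct (Rle_lt_dec 1 r) as [H1|H1].
    + eapply Rle_trans; [apply Rpower_le1|exact H1].
      split. apply Rmin_pos; lra. apply Rmin_l.
      left; apply Rinv_0_lt_compat, lt_0_INR; lia.
    + assert (Hb' : b <= a * r ^ N + sum_n_m (fun k => Cmod (c k) * r ^ k) m n).
      { unfold b. rewrite EZ, Cmod_opp. eapply Rle_trans. apply Cmod_triangle. lra. }
      assert (Hpk : forall k, (m <= k)%nat -> r ^ k <= r ^ m).
      { intros k Hk. replace k with (m + (k - m))%nat by lia. rewrite pow_add.
        assert (0 <= r ^ m) by (apply pow_le; lra).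
        assert (r ^ (k - m) <= 1).
        { rewrite <- (pow1 (k - m)). apply pow_incr; lra. }
        nra. }
      assert (Hs : sum_n_m (fun k => Cmod (c k) * r ^ k) m n <= S * r ^ m).
      { unfold S. rewrite <- sum_factor. apply sum_le_loc. intros k Hk.
        apply Rmult_le_compat_l. apply Cmod_ge_0. apply Hpk; lia. }
      assert (HN' : a * r ^ N <= a * r ^ m) by (apply Rmult_le_compat_l; [lra| apply Hpk; lia]).
      assert (Hkey : b <= (a + S) * r ^ m) by nra.
      assert (Hrm : b / (a + S) <= r ^ m).
      { apply (Rmult_le_reg_r (a + S)). lra. unfold Rdiv. rewrite Rmult_assoc, Rinv_l by lra. lra. }
      assert (Hrpos : 0 < r).
      { destruct Hr as [Hr|Hr]; auto. rewrite <- Hr in Hrm. rewrite pow_i in Hrm by lia.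
        assert (0 < b / (a + S)) by (apply Rdiv_lt_0_compat; lra). lra. }
      rewrite <- (root_pow r m) by auto.
      apply Rle_Rpower_l. left; apply Rinv_0_lt_compat, lt_0_INR; lia.
      split. apply Rmin_pos; lra. eapply Rle_trans. apply Rmin_r. exact Hrm.
  -
    unfold bigR1. fold S.
    destruct (Rle_lt_dec r 1) as [H1|H1].
    + eapply Rle_trans; [exact H1|apply Rpower_ge1]. apply Rmax_l.
      left; apply Rinv_0_lt_compat, lt_0_INR; lia.
    + assert (Ha' : a * r ^ N <= sum_n_m (fun k => Cmod (c k) * r ^ k) m n + b).
      { rewrite <- HX, EX, Cmod_opp. eapply Rle_trans. apply Cmod_triangle. fold b. lra. }
      assert (Hpk : forall k, (k <= n)%nat -> r ^ k <= r ^ n).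
      { intros k Hk. apply Rle_pow; lra || lia. }
      assert (Hs : sum_n_m (fun k => Cmod (c k) * r ^ k) m n <= S * r ^ n).
      { unfold S. rewrite <- sum_factor. apply sum_le_loc. intros k Hk.
        apply Rmult_le_compat_l. apply Cmod_ge_0. apply Hpk; lia. }
      assert (Hb1 : b <= b * r ^ n).
      { assert (1 <= r ^ n) by (apply pow_R1_Rle; lra). nra. }
      assert (HrN : r ^ N = r ^ (N - n) * r ^ n).
      { rewrite <- pow_add. f_equal. lia. }
      assert (Hrn : 0 < r ^ n) by (apply pow_lt; lra).
      assert (Hk : a * r ^ (N - n) <= S + b).
      { apply (Rmult_le_reg_r (r ^ n)). lra. nra. }
      assert (Hk2 : r ^ (N - n) <= (Cmod c0 + S) / Cmod cN).
      { fold a b. apply (Rmult_le_reg_r a). lra. unfold Rdiv.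
        rewrite Rmult_assoc, Rinv_l by lra. lra. }
      rewrite <- (root_pow r (N - n)) by (lra || lia).
      apply Rle_Rpower_l. left; apply Rinv_0_lt_compat, lt_0_INR; lia.
      split. apply pow_lt; lra. eapply Rle_trans. exact Hk2. apply Rmax_r.
Qed.
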